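(* For all finite multisets $\Phi,\Gamma$ and every formula $\chi$: if $\Phi,\Box\Gamma\Rightarrow\chi$ has a proof of height $h$ in $\mathsf{G4iSLt}$, then $\Phi,\Gamma\Rightarrow\chi$ has a proof in $\mathsf{G4iSLt}$ of height at most $h$.
   Context: Formulas are built by the grammar $\varphi ::= p \mid \bot \mid \varphi\land\varphi \mid \varphi\lor\varphi \mid \varphi\to\varphi \mid \Box\varphi$, with $p$ ranging over a countably infinite set of propositional variables. For a multiset $\Gamma$, $\Box\Gamma=\{\Box\psi:\psi\in\Gamma\}$; a boxed formula is one of the form $\Box\psi$. A sequent is $\Gamma\Rightarrow\chi$ with $\Gamma$ a finite multiset of formulas and $\chi$ a formula. The sequent calculus $\mathsf{G4iSLt}$ has the following rules, where $p$ is a propositional variable and $\Phi$ always denotes a multiset containing no boxed formula: (⊥L) $\bot,\Gamma\Rightarrow\chi$ (no premise); (IdP) $\Gamma,p\Rightarrow p$ (no premise); (∧L) from $\Gamma,\varphi,\psi\Rightarrow\chi$ infer $\Gamma,\varphi\land\psi\Rightarrow\chi$; (∧R) from $\Gamma\Rightarrow\varphi$ and $\Gamma\Rightarrow\psi$ infer $\Gamma\Rightarrow\varphi\land\psi$; (∨L) from $\Gamma,\varphi\Rightarrow\chi$ and $\Gamma,\psi\Rightarrow\chi$ infer $\Gamma,\varphi\lor\psi\Rightarrow\chi$; (∨R$_i$), $i\in\{1,2\}$: from $\Gamma\Rightarrow\varphi_i$ infer $\Gamma\Rightarrow\varphi_1\lor\varphi_2$; (p→L) from $\Gamma,p,\varphi\Rightarrow\chi$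 infer $\Gamma,p,p\to\varphi\Rightarrow\chi$; (→R) from $\Gamma,\varphi\Rightarrow\psi$ infer $\Gamma\Rightarrow\varphi\to\psi$; (□→L) from $\Phi,\Gamma,\psi,\Box\varphi\Rightarrow\varphi$ and $\Phi,\Box\Gamma,\psi\Rightarrow\chi$ infer $\Phi,\Box\Gamma,\Box\varphi\to\psi\Rightarrow\chi$; (SLtR) from $\Phi,\Gamma,\Box\varphi\Rightarrow\varphi$ infer $\Phi,\Box\Gamma\Rightarrow\Box\varphi$; (∧→L) from $\Gamma,\varphi\to(\psi\to\chi)\Rightarrow\delta$ infer $\Gamma,(\varphi\land\psi)\to\chi\Rightarrow\delta$; (∨→L) from $\Gamma,\varphi\to\chi,\psi\to\chi\Rightarrow\delta$ infer $\Gamma,(\varphi\lor\psi)\to\chi\Rightarrow\delta$; (→→L) from $\Gamma,\psi\to\chi\Rightarrow\varphi\to\psi$ and $\Gamma,\chi\Rightarrow\delta$ infer $\Gamma,(\varphi\to\psi)\to\chi\Rightarrow\delta$. (In the rules above $\Phi$ is box-free; in the claim, $\Phi$ is an arbitrary finite multiset.) A proof of a sequent $S$ is a finite tree of sequents with root $S$ in which each interior node together with its children forms an instance of a rule (conclusion, premises) and each leaf is the conclusion of a premise-free rule; $S$ is provable if it has a proof. The height of a proof is the maximum number of nodes on a path from the root to a leaf. *)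

(* Defs.v *)
From Stdlib Require Import List Permutation Arith.
Import ListNotations.

Inductive form : Type :=
| Var : nat -> form
| Bot : form
| And : form -> form -> form
| Or  : form -> form -> form
| Imp : form -> form -> form
| Box : form -> form.

Definition boxfree (Phi : list form) : Prop :=
  forall A, In A Phi -> forall B, A <> Box B.

(* Multisets are represented by lists; every rule's conclusion context is
   taken up to permutation (Gamma' is a rearrangement of the displayed
   multiset), so provability depends only on the underlying multiset. *)
Inductive proof : list form -> form -> Type :=
| BotL (G G' : list form) (c : form) :
    Permutation G' (Bot :: G) -> proof G' c
| IdP (G G' : list form) (p : nat) :
    Permutation G' (Var p :: G) -> proof G' (Var p)
| AndL (G G' : list form) (a b c : form) :
    Permutation G' (And a b :: G) ->
    proof (a :: b :: G) c -> proof G' c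
| AndR (G : list form) (a b : form) :
    proof G a -> proof G b -> proof G (And a b)
| OrL (G G' : list form) (a b c : form) :
    Permutation G' (Or a b :: G) ->
    proof (a :: G) c -> proof (b :: G) c -> proof G' c
| OrR1 (G : list form) (a b : form) :
    proof G a -> proof G (Or a b)
| OrR2 (G : list form) (a b : form) :
    proof G b -> proof G (Or a b)
| PImpL (G G' : list form) (p : nat) (a c : form) :
    Permutation G' (Var p :: Imp (Var p) a :: G) ->
    proof (Var p :: a :: G) c -> proof G' c
| ImpR (G : list form) (a b : form) :
    proof (a :: G) b -> proof G (Imp a b)
| BoxImpL (Phi G G' : list form) (a b c : form) :
    boxfree Phi ->
    Permutation G' (Imp (Box a) b :: Phi ++ map Box G) ->
    proof (b :: Box a :: Phi ++ G) a ->
    proof (b :: Phi ++ map Box G) c ->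
    proof G' c
| SLtR (Phi G G' : list form) (a : form) :
    boxfree Phi ->
    Permutation G' (Phi ++ map Box G) ->
    proof (Box a :: Phi ++ G) a ->
    proof G' (Box a)
| AndImpL (G G' : list form) (a b c d : form) :
    Permutation G' (Imp (And a b) c :: G) ->
    proof (Imp a (Imp b c) :: G) d -> proof G' d
| OrImpL (G G' : list form) (a b c d : form) :
    Permutation G' (Imp (Or a b) c :: G) ->
    proof (Imp a c :: Imp b c :: G) d -> proof G' d
| ImpImpL (G G' : list form) (a b c d : form) :
    Permutation G' (Imp (Imp a b) c :: G) ->
    proof (Imp b c :: G) (Imp a b) ->
    proof (c :: G) d -> proof G' d.

Fixpoint height {G : list form} {c : form} (d : proof G c) : nat :=
  match d with
  | BotL _ _ _ _ => 1
  | IdP _ _ _ _ => 1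
  | AndL _ _ _ _ _ _ d1 => S (height d1)
  | AndR _ _ _ d1 d2 => S (Nat.max (height d1) (height d2))
  | OrL _ _ _ _ _ _ d1 d2 => S (Nat.max (height d1) (height d2))
  | OrR1 _ _ _ d1 => S (height d1)
  | OrR2 _ _ _ d1 => S (height d1)
  | PImpL _ _ _ _ _ _ d1 => S (height d1)
  | ImpR _ _ _ d1 => S (height d1)
  | BoxImpL _ _ _ _ _ _ _ _ d1 d2 => S (Nat.max (height d1) (height d2))
  | SLtR _ _ _ _ _ _ d1 => S (height d1)
  | AndImpL _ _ _ _ _ _ _ d1 => S (height d1)
  | OrImpL _ _ _ _ _ _ _ d1 => S (height d1)
  | ImpImpL _ _ _ _ _ _ _ d1 d2 => S (Nat.max (height d1) (height d2))
  end.

(* Main.v *)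
Require Import Defs.
From Stdlib Require Import List Permutation Arith.
From Stdlib Require Import Lia.
Import ListNotations.

Definition form_eq_dec : forall x y : form, {x = y} + {x <> y}.
Proof. decide equality; apply Nat.eq_dec. Defined.

Definition sing (a : form) : list form := [a].
Lemma cons_sing : forall (a : form) l, a :: l = sing a ++ l.
Proof. reflexivity. Qed.

Ltac perm_tac :=
  repeat match goal with H : Permutation _ _ |- _ => revert H end;
  rewrite ?cons_sing, ?map_app;
  repeat (let H := fresh "HH" in intro H;
          let H' := fresh "HC" in
          pose proof (proj1 (@Permutation_count_occ _ form_eq_dec _ _) H) as H'; clear H);
  apply (@Permutation_count_occ _ form_eq_dec); let x := fresh "x" in intro x;
  repeat match goal with H : forall _ : form, _ |- _ => specialize (H x) end;
  rewrite ?count_occ_app in *; lia.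

Fixpoint nb (l : list form) : list form :=
  match l with
  | [] => []
  | x :: t => match x with Box _ => nb t | _ => x :: nb t end
  end.

Fixpoint bx (l : list form) : list form :=
  match l with
  | [] => []
  | x :: t => match x with Box y => y :: bx t | _ => bx t end
  end.

Lemma nb_app : forall l1 l2, nb (l1 ++ l2) = nb l1 ++ nb l2.
Proof. induction l1; intros; simpl; [reflexivity|destruct a; simpl; rewrite IHl1; reflexivity]. Qed.
Lemma bx_app : forall l1 l2, bx (l1 ++ l2) = bx l1 ++ bx l2.
Proof. induction l1; intros; simpl; [reflexivity|destruct a; simpl; rewrite IHl1; reflexivity]. Qed.
Lemma nb_map : forall l, nb (map Box l) = [].
Proof. induction l; simpl; auto. Qed.
Lemma bx_map : forall l, bx (map Box l) = l.
Proof. induction l; simpl; congruence. Qed.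
Lemma nb_bf : forall l, boxfree l -> nb l = l.
Proof.
  induction l; intros H; simpl; auto.
  assert (boxfree l) by (intros A HA; apply H; simpl; auto).
  destruct a; try (rewrite IHl; auto; fail).
  exfalso; exact (H (Box a) (or_introl eq_refl) a eq_refl).
Qed.
Lemma bx_bf : forall l, boxfree l -> bx l = [].
Proof.
  induction l; intros H; simpl; auto.
  assert (boxfree l) by (intros A HA; apply H; simpl; auto).
  destruct a; try (rewrite IHl; auto; fail).
  exfalso; exact (H (Box a) (or_introl eq_refl) a eq_refl).
Qed.
Lemma nb_perm : forall l1 l2, Permutation l1 l2 -> Permutation (nb l1) (nb l2).
Proof.
  intros l1 l2 H; induction H; simpl.
  - constructor.
  - destruct x; auto.
  - destruct x; destruct y; try constructor; auto.
  - eauto using Permutation_trans.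
Qed.
Lemma bx_perm : forall l1 l2, Permutation l1 l2 -> Permutation (bx l1) (bx l2).
Proof.
  intros l1 l2 H; induction H; simpl.
  - constructor.
  - destruct x; auto.
  - destruct x; destruct y; try constructor; auto.
  - eauto using Permutation_trans.
Qed.
Lemma dec_perm : forall l, Permutation l (nb l ++ map Box (bx l)).
Proof.
  induction l; simpl; auto.
  destruct a; simpl; try (constructor; auto; fail).
  apply Permutation_cons_app; auto.
Qed.
Lemma bf_nb : forall l, boxfree (nb l).
Proof.
  induction l; simpl; intros A HA; [destruct HA|].
  destruct a; try (apply IHl; auto; fail);
  (destruct HA as [<-|HA]; [intros B HB; discriminate|apply IHl; auto]).
Qed.
Lemma bf_app : forall l1 l2, boxfree l1 -> boxfree l2 -> boxfree (l1 ++ l2).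
Proof.
  intros l1 l2 H1 H2 A HA; apply in_app_or in HA; destruct HA; [apply H1|apply H2]; auto.
Qed.

Lemma extract : forall X G0 Phi Gam, (forall B, X <> Box B) ->
  Permutation (X :: G0) (Phi ++ map Box Gam) ->
  exists Phi0, Permutation Phi (X :: Phi0) /\ Permutation G0 (Phi0 ++ map Box Gam).
Proof.
  intros X G0 Phi Gam HX HP.
  assert (HI : In X (Phi ++ map Box Gam)) by (eapply Permutation_in; [exact HP|left; auto]).
  apply in_app_or in HI; destruct HI as [HI|HI].
  - apply in_split in HI; destruct HI as [l1 [l2 ->]].
    exists (l1 ++ l2); split.
    + perm_tac.
    + perm_tac.
  - apply in_map_iff in HI; destruct HI as [y [Hy _]]; exfalso; exact (HX y (eq_sym Hy)).
Qed.

Lemma exch : forall G c (d : proof G c) G', Permutation G G' ->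
  exists d' : proof G' c, height d' <= height d.
Proof.
  induction d; intros G2 HP.
  - exists (BotL G G2 c (perm_trans (Permutation_sym HP) p)); simpl; lia.
  - exists (IdP G G2 p (perm_trans (Permutation_sym HP) p0)); simpl; lia.
  - exists (AndL G G2 a b c (perm_trans (Permutation_sym HP) p) d); simpl; lia.
  - destruct (IHd1 G2 HP) as [e1 H1]; destruct (IHd2 G2 HP) as [e2 H2].
    exists (AndR G2 a b e1 e2); simpl; lia.
  - exists (OrL G G2 a b c (perm_trans (Permutation_sym HP) p) d1 d2); simpl; lia.
  - destruct (IHd G2 HP) as [e1 H1]; exists (OrR1 G2 a b e1); simpl; lia.
  - destruct (IHd G2 HP) as [e1 H1]; exists (OrR2 G2 a b e1); simpl; lia.
  - exists (PImpL G G2 p a c (perm_trans (Permutation_sym HP) p0) d); simpl; lia.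
  - destruct (IHd (a :: G2) (perm_skip a HP)) as [e1 H1]; exists (ImpR G2 a b e1); simpl; lia.
  - exists (BoxImpL Phi G G2 a b c b0 (perm_trans (Permutation_sym HP) p) d1 d2); simpl; lia.
  - exists (SLtR Phi G G2 a b (perm_trans (Permutation_sym HP) p) d); simpl; lia.
  - exists (AndImpL G G2 a b c d (perm_trans (Permutation_sym HP) p) d0); simpl; lia.
  - exists (OrImpL G G2 a b c d (perm_trans (Permutation_sym HP) p) d0); simpl; lia.
  - exists (ImpImpL G G2 a b c d1 (perm_trans (Permutation_sym HP) p) d2 d3); simpl; lia.
Qed.

Ltac hle := first [assumption | eapply Nat.le_trans; eassumption].
Ltac hfin := simpl; apply le_n_S; first [apply Nat.le_0_l | hle | apply Nat.max_le_compat; hle].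
Ltac nbx := intros B HB; discriminate.

Lemma unbox : forall D c (d : proof D c) Phi Gam,
  Permutation D (Phi ++ map Box Gam) ->
  exists d' : proof (Phi ++ Gam) c, height d' <= height d.
Proof.
  induction d as
    [G G' c p | G G' n p | G G' a b c p d IH | G a b d1 IH1 d2 IH2
    | G G' a b c p d1 IH1 d2 IH2 | G a b d IH | G a b d IH
    | G G' n a c p d IH | G a b d IH
    | Ph G G' a b c bf p d1 IH1 d2 IH2 | Ph G G' a bf p d IH
    | G G' a b c e p d IH | G G' a b c e p d IH
    | G G' a b c e p d1 IH1 d2 IH2 ];
  intros Phi Gam HP.
  - destruct (extract Bot G Phi Gam ltac:(nbx) ltac:(perm_tac)) as [P0 [H1 H2]].
    exists (BotL (P0 ++ Gam) (Phi ++ Gam) c ltac:(perm_tac)); hfin.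
  - destruct (extract (Var n) G Phi Gam ltac:(nbx) ltac:(perm_tac)) as [P0 [H1 H2]].
    exists (IdP (P0 ++ Gam) (Phi ++ Gam) n ltac:(perm_tac)); hfin.
  - destruct (extract (And a b) G Phi Gam ltac:(nbx) ltac:(perm_tac)) as [P0 [H1 H2]].
    destruct (IH (a :: b :: P0) Gam ltac:(perm_tac)) as [e He].
    assert (HQ : Permutation (Phi ++ Gam) (And a b :: P0 ++ Gam)) by perm_tac.
    exists (AndL (P0 ++ Gam) (Phi ++ Gam) a b c HQ e); hfin.
  - destruct (IH1 Phi Gam HP) as [e1 H1]; destruct (IH2 Phi Gam HP) as [e2 H2].
    exists (AndR _ a b e1 e2); hfin.
  - destruct (extract (Or a b) G Phi Gam ltac:(nbx) ltac:(perm_tac)) as [P0 [H1 H2]].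
    destruct (IH1 (a :: P0) Gam ltac:(perm_tac)) as [e1 He1].
    destruct (IH2 (b :: P0) Gam ltac:(perm_tac)) as [e2 He2].
    exists (OrL (P0 ++ Gam) (Phi ++ Gam) a b c ltac:(perm_tac) e1 e2); hfin.
  - destruct (IH Phi Gam HP) as [e1 H1]; exists (OrR1 _ a b e1); hfin.
  - destruct (IH Phi Gam HP) as [e1 H1]; exists (OrR2 _ a b e1); hfin.
  - destruct (extract (Var n) (Imp (Var n) a :: G) Phi Gam ltac:(nbx) ltac:(perm_tac)) as [P0 [H1 H2]].
    destruct (extract (Imp (Var n) a) G P0 Gam ltac:(nbx) H2) as [P1 [H3 H4]].
    destruct (IH (Var n :: a :: P1) Gam ltac:(perm_tac)) as [e He].
    exists (PImpL (P1 ++ Gam) (Phi ++ Gam) n a c ltac:(perm_tac) e); hfin.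
  - destruct (IH (a :: Phi) Gam ltac:(perm_tac)) as [e He].
    exists (ImpR _ a b e); hfin.
  - destruct (extract (Imp (Box a) b) (Ph ++ map Box G) Phi Gam ltac:(nbx) ltac:(perm_tac)) as [P0 [H1 H0]].
    pose proof (nb_perm _ _ H0) as Hn; rewrite !nb_app, !nb_map, nb_bf, !app_nil_r in Hn by exact bf.
    pose proof (bx_perm _ _ H0) as Hb; rewrite !bx_app, !bx_map, bx_bf in Hb by exact bf.
    simpl in Hb.
    pose proof (dec_perm P0) as HdP; pose proof (dec_perm Gam) as HdG.
    destruct (IH1 (b :: Box a :: nb P0 ++ bx P0 ++ nb Gam) (bx Gam) ltac:(perm_tac)) as [e1 He1].
    destruct (exch _ _ e1 (b :: Box a :: (nb P0 ++ nb Gam) ++ (bx P0 ++ bx Gam)) ltac:(perm_tac)) as [f1 Hf1].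
    destruct (IH2 (b :: P0) Gam ltac:(perm_tac)) as [e2 He2].
    destruct (exch _ _ e2 (b :: (nb P0 ++ nb Gam) ++ map Box (bx P0 ++ bx Gam)) ltac:(perm_tac)) as [f2 Hf2].
    exists (BoxImpL (nb P0 ++ nb Gam) (bx P0 ++ bx Gam) (Phi ++ Gam) a b c
              (bf_app _ _ (bf_nb _) (bf_nb _)) ltac:(perm_tac) f1 f2); hfin.
  - assert (H0 : Permutation (Ph ++ map Box G) (Phi ++ map Box Gam)) by perm_tac.
    pose proof (nb_perm _ _ H0) as Hn; rewrite !nb_app, !nb_map, nb_bf, !app_nil_r in Hn by exact bf.
    pose proof (bx_perm _ _ H0) as Hb; rewrite !bx_app, !bx_map, bx_bf in Hb by exact bf.
    simpl in Hb.
    pose proof (dec_perm Phi) as HdP; pose proof (dec_perm Gam) as HdG.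
    destruct (IH (Box a :: nb Phi ++ bx Phi ++ nb Gam) (bx Gam) ltac:(perm_tac)) as [e1 He1].
    destruct (exch _ _ e1 (Box a :: (nb Phi ++ nb Gam) ++ (bx Phi ++ bx Gam)) ltac:(perm_tac)) as [f1 Hf1].
    exists (SLtR (nb Phi ++ nb Gam) (bx Phi ++ bx Gam) (Phi ++ Gam) a
              (bf_app _ _ (bf_nb _) (bf_nb _)) ltac:(perm_tac) f1); hfin.
  - destruct (extract (Imp (And a b) c) G Phi Gam ltac:(nbx) ltac:(perm_tac)) as [P0 [H1 H2]].
    destruct (IH (Imp a (Imp b c) :: P0) Gam ltac:(perm_tac)) as [f Hf].
    exists (AndImpL (P0 ++ Gam) (Phi ++ Gam) a b c e ltac:(perm_tac) f); hfin.
  - destruct (extract (Imp (Or a b) c) G Phi Gam ltac:(nbx) ltac:(perm_tac)) as [P0 [H1 H2]].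
    destruct (IH (Imp a c :: Imp b c :: P0) Gam ltac:(perm_tac)) as [f Hf].
    exists (OrImpL (P0 ++ Gam) (Phi ++ Gam) a b c e ltac:(perm_tac) f); hfin.
  - destruct (extract (Imp (Imp a b) c) G Phi Gam ltac:(nbx) ltac:(perm_tac)) as [P0 [H1 H2]].
    destruct (IH1 (Imp b c :: P0) Gam ltac:(perm_tac)) as [f1 Hf1].
    destruct (IH2 (c :: P0) Gam ltac:(perm_tac)) as [f2 Hf2].
    exists (ImpImpL (P0 ++ Gam) (Phi ++ Gam) a b c e ltac:(perm_tac) f1 f2); hfin.
Qed.

Theorem mainTheorem7 :
  forall (Phi G : list form) (chi : form) (h : nat)
         (d : proof (Phi ++ map Box G) chi),
    height d = h ->
    exists d' : proof (Phi ++ G) chi, height d' <= h.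
Proof.
  intros Phi G chi h d Hh; subst h.
  exact (unbox _ _ d Phi G (Permutation_refl _)).
Qed.
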